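(* Let $m\ge3$ be an integer and let $n$ be a positive divisor of $\frac{3^m-1}{2}$ with $n>\frac{3^{\lfloor m/2\rfloor}+1}{2}$. Let $\beta$ be a primitive $2n$-th root of unity in an extension field of $\mathrm{GF}(3)$, and for $i$ let $\mathbb{M}_{\beta^i}(x)$ be the minimal polynomial of $\beta^i$ over $\mathrm{GF}(3)$. Then $\mathrm{ord}_{2n}(3)=m$ and $\mathrm{lcm}(\mathbb{M}_\beta(x),\mathbb{M}_{\beta^{2n-1}}(x))=\mathbb{M}_\beta(x)\mathbb{M}_{\beta^{2n-1}}(x)$.
   Context: $\mathrm{ord}_M(3)$ is the multiplicative order of $3$ modulo $M$; lcm is the least common multiple of polynomials. *)

(* Defs.v *)
From HB Require Import structures.
From mathcomp Require Import all_boot all_order all_algebra all_field.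
Set Implicit Arguments. Unset Strict Implicit. Unset Printing Implicit Defensive.
Import GRing.Theory.
Local Open Scope ring_scope.

Definition is_mult_order (M a k : nat) : Prop :=
  (0 < k)%N /\ (a ^ k = 1 %[mod M])%N /\
  (forall j : nat, (0 < j)%N -> (a ^ j = 1 %[mod M])%N -> (k <= j)%N).

Definition is_lcmp (R : fieldType) (p q l : {poly R}) : Prop :=
  l \is monic /\ p %| l /\ q %| l /\
  (forall r : {poly R}, p %| r -> q %| r -> l %| r).

(* Main.v *)
Require Import Defs.
From HB Require Import structures.
From mathcomp Require Import all_boot all_order all_algebra all_field.
From mathcomp Require Import zify ring.
Local Open Scope ring_scope.
Import GRing.Theory.

Lemma ord_dvd (N d j : nat) : (0 < d)%N -> (3 ^ d = 1 %[mod N])%N ->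
  (forall k, (0 < k)%N -> (3 ^ k = 1 %[mod N])%N -> (d <= k)%N) ->
  (3 ^ j = 1 %[mod N])%N -> (d %| j)%N.
Proof.
move=> d0 Hd Hmin Hj.
have E : (3 ^ j = (3 ^ d) ^ (j %/ d) * 3 ^ (j %% d))%N.
  by rewrite -expnM -expnD mulnC -divn_eq.
have Hr : (3 ^ (j %% d) = 1 %[mod N])%N.
  by rewrite -Hj E -modnMml -(modnXm _ N (3 ^ d)) Hd modnXm exp1n modnMml mul1n.
apply/eqP; case: (posnP (j %% d)) => [//|H0].
have := Hmin _ H0 Hr; have := ltn_pmod j d0; lia.
Qed.

Lemma bound (N d : nat) : (0 < d)%N -> (0 < N)%N -> (3 ^ d = 1 %[mod N])%N ->
  (N <= 3 ^ d - 1)%N.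
Proof.
move=> d0 N0 /eqP; rewrite eqn_mod_dvd ?expn_gt0 // => H.
apply: dvdn_leq => //.
have : (3 ^ 1 <= 3 ^ d)%N by apply: leq_pexp2l.
lia.
Qed.

Lemma part1 (m n : nat) :
  (3 <= m)%N -> (0 < n)%N -> (n %| (3 ^ m - 1) %/ 2)%N ->
  ((3 ^ m./2 + 1) %/ 2 < n)%N -> is_mult_order (2 * n) 3 m.
Proof.
move=> m3 n0 Hdiv Hn.
rewrite ltn_divLR // in Hn.
have H2 : (2 %| 3 ^ m - 1)%N.
  by rewrite dvdn2 oddB ?expn_gt0 // oddX orbT.
have HN : (2 * n %| 3 ^ m - 1)%N.
  by rewrite -(divnK H2) mulnC dvdn_pmul2r.
have Hm : (3 ^ m = 1 %[mod 2 * n])%N.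
  by apply/eqP; rewrite eqn_mod_dvd ?expn_gt0.
have exP : exists k, (0 < k)%N && (3 ^ k == 1 %[mod 2 * n])%N.
  by exists m; rewrite Hm eqxx andbT; apply: leq_trans m3.
case: (ex_minnP exP) => d /andP[d0 /eqP Hd] Hmin.
have Hmin' : forall k, (0 < k)%N -> (3 ^ k = 1 %[mod 2 * n])%N -> (d <= k)%N.
  by move=> k k0 Hk; apply: Hmin; rewrite k0 Hk eqxx.
have dm : (d %| m)%N by apply: ord_dvd Hd Hmin' Hm.
have dlem : (d <= m)%N by apply: Hmin' => //; apply: leq_trans m3.
have dEm : d = m.
  apply/eqP; rewrite eqn_leq dlem /=; rewrite leqNgt; apply/negP => dltm.
  have d2 : (d <= m./2)%N.
    case/dvdnP: dm => k Ek.
    have k2 : (2 <= k)%N.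
      case: k Ek => [|[|k]] Ek //; first by move: m3; rewrite Ek.
      by move: dltm; rewrite Ek mul1n ltnn.
    have : (d * 2 <= k * d)%N by rewrite mulnC leq_mul2r k2 orbT.
    rewrite -Ek => h; clear -h; lia.
  have N0 : (0 < 2 * n)%N by rewrite muln_gt0 n0.
  have := @bound (2 * n) d d0 N0 Hd.
  have : (3 ^ d <= 3 ^ m./2)%N by apply: leq_pexp2l.
  move: Hn; clear; set a := (3 ^ d)%N; set b := (3 ^ m./2)%N; lia.
split; first by apply: leq_trans m3.
split; first by [].
by move=> j j0 Hj; rewrite -dEm; apply: Hmin'.
Qed.

Lemma part2_nat (m n i : nat) :
  (0 < n)%N -> ((3 ^ m./2 + 1) %/ 2 < n)%N -> is_mult_order (2 * n) 3 m ->
  (i < m)%N -> (1 = (2 * n - 1) * 3 ^ i %[mod 2 * n])%N -> False.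
Proof.
move=> n0 Hn [m0 [Hm Hmin]] im H.
rewrite ltn_divLR // in Hn.
have N0 : (0 < 2 * n)%N by rewrite muln_gt0 n0.
have E : (3 ^ i + (2 * n - 1) * 3 ^ i = 2 * n * 3 ^ i)%N.
  by rewrite -{1}[(3 ^ i)%N]mul1n -mulnDl subnKC.
have Hd : (2 * n %| 3 ^ i + 1)%N.
  by rewrite /dvdn -modnDmr H modnDmr E modnMr.
have Hle : (2 * n <= 3 ^ i + 1)%N by apply: dvdn_leq Hd; rewrite addn1.
case: (posnP i) => [i0|ipos].
  move: Hle Hn; rewrite i0 expn0; clear; set b := (3 ^ m./2)%N.
  have : (0 < b)%N by rewrite expn_gt0.
  lia.
have H2 : (3 ^ (i * 2) = 1 %[mod 2 * n])%N.
  apply/eqP; rewrite eqn_mod_dvd ?expn_gt0 //.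
  have -> : (3 ^ (i * 2) - 1 = (3 ^ i + 1) * (3 ^ i - 1))%N.
    rewrite expnM; have : (0 < 3 ^ i)%N by rewrite expn_gt0.
    clear; set a := (3 ^ i)%N; move=> a0; rewrite expnS expn1; nia.
  by apply: dvdn_mulr.
have : (m %| i * 2)%N by apply: ord_dvd Hm Hmin H2.
case/dvdnP=> k Ek.
have k1 : k = 1%N.
  case: k Ek => [|[|k]] Ek //; first by move: ipos Ek; clear; lia.
  by move: im Ek; clear; nia.
have hE : m./2 = i by move: Ek; rewrite k1 mul1n => <-; clear; lia.
move: Hle Hn; rewrite hE; clear; set b := (3 ^ i)%N; lia.
Qed.
Lemma cube_fixed (L : fieldExtType 'F_3) (c : L) : c ^+ 3 = c -> c \in 1%VS.
Proof.
move=> h.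
have : c * (c - 1) * (c + 1) = 0.
  have -> : c * (c - 1) * (c + 1) = c ^+ 3 - c by ring.
  by rewrite h subrr.
move/eqP; rewrite !mulf_eq0 => /orP[/orP[]|] /eqP.
- by move=> ->; rewrite mem0v.
- by move/eqP; rewrite subr_eq0 => /eqP ->; rewrite mem1v.
- by move/eqP; rewrite addr_eq0 => /eqP ->; rewrite memvN mem1v.
Qed.

Lemma frob_poly (L : fieldExtType 'F_3) (x : L) (m : nat) :
  x ^+ (3 ^ m) = x -> (0 < m)%N ->
  \prod_(a <- [seq x ^+ (3 ^ i) | i <- iota 0 m]) ('X - a%:P) \is a polyOver 1%VS.
Proof.
move=> hx m0.
have ch : (3 \in [pchar L])%N by rewrite (pchar_lalg L) pchar_Fp.
set Q := \prod_(a <- _) _.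
have HQ : map_poly (pFrobenius_aut ch) Q = Q.
  rewrite /Q map_prod_XsubC -(big_map (pFrobenius_aut ch) xpredT (fun a => 'X - a%:P)).
  rewrite -map_comp.
  have -> : [seq (pFrobenius_aut ch \o (fun i => x ^+ (3 ^ i))) i | i <- iota 0 m]
      = [seq x ^+ (3 ^ i) | i <- iota 1 m].
    have e : iota 1 m = map (addn 1) (iota 0 m) by rewrite -iotaDl.
    rewrite e -map_comp; apply: eq_map => i /=.
    by rewrite pFrobenius_autE -exprM expnSr.
  apply: perm_big.
  case: m m0 {Q} hx => // k _ hx.
  rewrite -[k.+1]addn1 iotaD map_cat /= add1n hx /=.
  by rewrite cats1 perm_rcons addn1 /= expn0 expr1.
apply/polyOverP => i.
apply: cube_fixed.
by have := congr1 (fun p : {poly L} => p`_i) HQ; rewrite coef_map /= pFrobenius_autE.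
Qed.

Theorem lemma30 (m n : nat) (L : fieldExtType 'F_3) (beta : L) :
  (3 <= m)%N -> (0 < n)%N -> (n %| (3 ^ m - 1) %/ 2)%N ->
  ((3 ^ m./2 + 1) %/ 2 < n)%N ->
  (2 * n).-primitive_root beta ->
  is_mult_order (2 * n) 3 m /\
  is_lcmp (minPoly 1%VS beta) (minPoly 1%VS (beta ^+ (2 * n - 1)))
          (minPoly 1%VS beta * minPoly 1%VS (beta ^+ (2 * n - 1))).
Proof.
move=> m3 n0 Hdiv Hn prim.
have Hord := @part1 m n m3 n0 Hdiv Hn.
split => //.
have m0 : (0 < m)%N by apply: leq_trans m3.
set g := beta ^+ (2 * n - 1).
set p := minPoly 1%VS beta; set q := minPoly 1%VS g.
have hb : beta ^+ (3 ^ m) = beta.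
  have [_ [Hm _]] := Hord.
  rewrite -[in RHS](expr1 beta); apply/eqP.
  by rewrite (eq_prim_root_expr prim) Hm.
have hg : g ^+ (3 ^ m) = g by rewrite /g -exprM mulnC exprM hb.
have cop : coprimep p q.
  rewrite -gcdp_eqp1.
  have gK := gcdp_polyOver (minPolyOver 1%VS beta) (minPolyOver 1%VS g).
  case/orP: (minPoly_irr gK (dvdp_gcdl p q)) => // Hg.
  have pq : p %| q by rewrite -(eqp_dvdl _ Hg) dvdp_gcdr.
  have rq : root q beta := root_dvdp pq (root_minPoly _ _).
  have rQ : root (\prod_(a <- [seq g ^+ (3 ^ i) | i <- iota 0 m]) ('X - a%:P)) beta.
    apply: root_dvdp rq; apply: minPoly_dvdp; first exact: frob_poly.
    rewrite root_prod_XsubC; apply/mapP; exists 0%N; last by rewrite expn0 expr1.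
    by rewrite mem_iota.
  rewrite root_prod_XsubC in rQ.
  case/mapP: rQ => i; rewrite mem_iota add0n => im.
  rewrite /g -exprM -[X in X = _](expr1 beta) => /eqP.
  rewrite (eq_prim_root_expr prim) => /eqP H.
  exfalso; exact: (@part2_nat m n i n0 Hn Hord im H).
split; first by rewrite rpredM ?monic_minPoly.
split; first exact: dvdp_mulIl.
split; first exact: dvdp_mulIr.
by move=> r pr qr; rewrite Gauss_dvdp // pr qr.
Qed.
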